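(* For a finite set of types $T$ and a positive integer $n$, $\gamma(\mathcal{G}_T^n)\ge\mathrm{GPoA}(\mathcal{G}_T^n)$.
   Context: Fix a positive integer $n$ and a finite set of resource types $T=\{(c_1,f_1),\dots,(c_m,f_m)\}$, $c_t,f_t:\{1,\dots,n\}\to\mathbb{R}$, extended by $c_t(0)=f_t(0)=f_t(n+1)=0$. The class $\mathcal{G}_T^n$ consists of all local resource allocation games: agent set $N=\{1,\dots,n\}$; finite resource set $\mathcal{R}$; for each $r$ a value $v_r\ge0$ and a type $(c,f)\in T$, with $c_r=v_rc$, $f_r=v_rf$; action sets $\mathcal{A}_i\subseteq2^{\mathcal{R}}$, $\mathcal{A}=\prod_i\mathcal{A}_i$; $|a|_r$ = number of agents $i$ with $r\in a_i$; $C(a)=\sum_rc_r(|a|_r)$, $J_i(a)=\sum_{r\in a_i}f_r(|a|_r)$. $\mathrm{GPoA}(\mathcal{G}_T^n)=\inf\{\lambda/(1-\mu):\lambda>0,\mu<1\}$ over $(\lambda,\mu)$ such that for every $G\in\mathcal{G}_T^n$ and all $a,a'\in\mathcal{A}$: $\sum_iJ_i(a'_i,a_{-i})-\sum_iJ_i(a)+C(a)\le\lambda C(a')+\mu C(a)$. With $\mathbb{N}=\{0,1,\dots\}$, $\mathcal{I}=\{(x,y,z)\in\mathbb{N}^3:1\le x+y-z\le n,\ z\le\min\{x,y\}\}$ and $\mathcal{I}_{\mathcal{R}}=\{(x,y,z)\in\mathcal{I}:x+y-z=n\text{ or }(x-z)(y-z)z=0\}$. $\mathcal{S}(\mathcal{G}_T^n)$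 is the set of $(\lambda,\mu)$ with $\lambda>0$, $\mu<1$ such that for all $(c,f)\in T$ and all $(x,y,z)\in\mathcal{I}_{\mathcal{R}}$: $(z-x)f(x)+(y-z)f(x+1)+c(x)\le\lambda c(y)+\mu c(x)$. Define $\gamma(\mathcal{G}_T^n)=\inf\{\lambda/(1-\mu):(\lambda,\mu)\in\mathcal{S}(\mathcal{G}_T^n)\}$. *)

(* Defs.v *)
From mathcomp Require Import all_boot all_order all_algebra.
From mathcomp Require Import all_classical all_reals ereal.
Set Implicit Arguments. Unset Strict Implicit. Unset Printing Implicit Defensive.
Import Order.TTheory GRing.Theory Num.Theory.
Local Open Scope ring_scope.
Local Open Scope classical_set_scope.

Section Defs.
Variable R : realType.

(* A resource type is a pair (c, f) of functions; only their values on
   {1,...,n} matter; they are extended by 0 outside (c(0)=f(0)=f(n+1)=0). *)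
Definition rtype := ((nat -> R) * (nat -> R))%type.

Definition ext (n : nat) (g : nat -> R) (k : nat) : R :=
  if (1 <= k <= n)%N then g k else 0.

Definition load (n : nat) (Res : finType) (a : 'I_n -> {set Res}) (r : Res) : nat :=
  #|[set i : 'I_n | r \in a i]|.

Definition dev (n : nat) (Res : finType) (a : 'I_n -> {set Res}) (i : 'I_n)
  (s : {set Res}) : 'I_n -> {set Res} := fun j => if j == i then s else a j.

Definition welfare (n : nat) (Res : finType) (v : Res -> R) (typ : Res -> rtype)
  (a : 'I_n -> {set Res}) : R :=
  \sum_(r : Res) v r * ext n (typ r).1 (load a r).

Definition utility (n : nat) (Res : finType) (v : Res -> R) (typ : Res -> rtype)
  (a : 'I_n -> {set Res}) (i : 'I_n) : R :=
  \sum_(r in a i) v r * ext n (typ r).2 (load a r).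

Definition game_feasible (n : nat) (T : set rtype) (l m : R) : Prop :=
  forall (Res : finType) (v : Res -> R) (typ : Res -> rtype)
         (A : 'I_n -> {set {set Res}}) (a a' : 'I_n -> {set Res}),
    (forall r, 0 <= v r) -> (forall r, T (typ r)) ->
    (forall i, a i \in A i) -> (forall i, a' i \in A i) ->
    \sum_(i < n) utility v typ (dev a i (a' i)) i
      - \sum_(i < n) utility v typ a i + welfare v typ a
    <= l * welfare v typ a' + m * welfare v typ a.

Definition GPoA (n : nat) (T : set rtype) : \bar R :=
  ereal_inf [set (p.1 / (1 - p.2))%:E | p in
    [set p : R * R | 0 < p.1 /\ p.2 < 1 /\ game_feasible n T p.1 p.2]].

Definition in_I (n x y z : nat) : bool :=
  [&& (1 <= x + y - z)%N, (x + y - z <= n)%N & (z <= minn x y)%N].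

Definition in_IR (n x y z : nat) : bool :=
  in_I n x y z && (((x + y - z)%N == n) || ((x - z) * (y - z) * z == 0)%N).

Definition S_feasible (n : nat) (T : set rtype) (l m : R) : Prop :=
  forall cf : rtype, T cf -> forall x y z : nat, in_IR n x y z ->
    (z%:R - x%:R) * ext n cf.2 x + (y%:R - z%:R) * ext n cf.2 x.+1 + ext n cf.1 x
    <= l * ext n cf.1 y + m * ext n cf.1 x.

Definition gamma (n : nat) (T : set rtype) : \bar R :=
  ereal_inf [set (p.1 / (1 - p.2))%:E | p in
    [set p : R * R | 0 < p.1 /\ p.2 < 1 /\ S_feasible n T p.1 p.2]].

End Defs.

(* Main.v *)
Require Import Defs.
From mathcomp Require Import all_boot all_order all_algebra.
From mathcomp Require Import all_classical all_reals ereal.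
From mathcomp Require Import ring lra zify.
Import Order.TTheory GRing.Theory Num.Theory.

Local Open Scope ring_scope.
Lemma perres (R : realType) n (T : set (rtype R)) l m cf x z w :
  (0 < n)%N -> S_feasible n T l m -> T cf -> (z <= x)%N -> (x + w <= n)%N ->
  (z%:R - x%:R) * ext n cf.2 x + w%:R * ext n cf.2 x.+1 + ext n cf.1 x
  <= l * ext n cf.1 (z + w) + m * ext n cf.1 x.
Proof.
move=> n0 Sf Tcf zx xwn.
have [/eqP x0|xpos] := boolP (x + w == 0)%N.
  have -> : x = 0%N by lia.
  have -> : w = 0%N by lia.
  have -> : z = 0%N by lia.
  rewrite /ext /=; lra.
set y := (z + w)%N.
have Hw : (w%:R : R) = y%:R - z%:R by rewrite /y natrD; ring.
rewrite Hw.
set d := ext n cf.2 x - ext n cf.2 x.+1.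
have [d0|d0] := lerP 0 d.
  have H := Sf cf Tcf x y (minn x y).
  have : in_IR n x y (minn x y).
    rewrite /in_IR /in_I; apply/andP; split; first by apply/and3P; split; lia.
    apply/orP; right; apply/eqP.
    have [hk|hk] : (x - minn x y = 0 \/ y - minn x y = 0)%N by lia.
      by rewrite hk.
    by rewrite hk muln0 mul0n.
  move/H => {}H.
  have hz : (z%:R : R) <= (minn x y)%:R by rewrite ler_nat; lia.
  have : 0 <= ((minn x y)%:R - z%:R) * d by apply: mulr_ge0; lra.
  rewrite /d; nra.
have H := Sf cf Tcf x y (x + y - n)%N.
have : in_IR n x y (x + y - n)%N.
  rewrite /in_IR /in_I; apply/andP; split; first by apply/and3P; split; lia.
  case: (leqP n (x + y)) => h.
    by apply/orP; left; apply/eqP; lia.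
  have -> : (x + y - n = 0)%N by lia.
  by rewrite muln0 eqxx orbT.
move/H => {}H.
have hz : ((x + y - n)%N%:R : R) <= z%:R by rewrite ler_nat; lia.
have : 0 <= (z%:R - (x + y - n)%N%:R) * (- d) by apply: mulr_ge0; lra.
rewrite /d; nra.
Qed.

Lemma loadE n (Res : finType) (a : 'I_n -> {set Res}) (r : Res) :
  load a r = #|[set i | r \in a i]|.
Proof.
rewrite /load; apply: eq_card => i.
rewrite inE.
by apply/idP/idP => [/set_mem|h]; [|exact: mem_set].
Qed.

Lemma load_dev n (Res : finType) (a : 'I_n -> {set Res}) (i : 'I_n) (s : {set Res}) (r : Res) :
  r \in s -> load (dev a i s) r = (load a r + (r \notin a i))%N.
Proof.
move=> rs; rewrite !loadE.
have -> : [set j | r \in dev a i s j] = i |: [set j | r \in a j].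
  apply/setP => j; rewrite !inE /dev.
  by case: eqP => [->|_]; rewrite ?rs ?eqxx.
by rewrite cardsU1 inE addnC.
Qed.

Lemma sum_dev (R : realType) n (Res : finType) (v : Res -> R) typ
  (a a' : 'I_n -> {set Res}) :
  \sum_(i < n) utility v typ (dev a i (a' i)) i =
  \sum_r (v r * ext n (typ r).2 (load a r) *+
            #|[set i | r \in a' i] :&: [set i | r \in a i]|
          + v r * ext n (typ r).2 (load a r).+1 *+
            #|[set i | r \in a' i] :\: [set i | r \in a i]|).
Proof.
rewrite /utility.
under eq_bigr => i _.
  rewrite (_ : dev a i (a' i) i = a' i); last by rewrite /dev eqxx.
  under eq_bigr => r rin do rewrite load_dev //.
  rewrite big_mkcond /=.
  over.
rewrite exchange_big /=; apply: eq_bigr => r _.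
rewrite -(big_mkcond (fun i => r \in a' i)).
rewrite (eq_bigl (fun i => i \in [set i | r \in a' i])); last by move=> i; rewrite inE.
rewrite (big_setID [set i | r \in a i]) /=.
congr (_ + _).
  rewrite -sumr_const; apply: eq_bigr => i; rewrite !inE => /andP[_ ->].
  by rewrite addn0.
rewrite -sumr_const; apply: eq_bigr => i; rewrite !inE => /andP[/negbTE -> _] /=.
by rewrite addn1.
Qed.

Lemma sum_util (R : realType) n (Res : finType) (v : Res -> R) typ
  (a : 'I_n -> {set Res}) :
  \sum_(i < n) utility v typ a i =
  \sum_r v r * ext n (typ r).2 (load a r) *+ load a r.
Proof.
rewrite /utility.
under eq_bigr => i _ do rewrite big_mkcond /=.
rewrite exchange_big /=; apply: eq_bigr => r _.
rewrite -(big_mkcond (fun i => r \in a i)).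
rewrite (eq_bigl (fun i => i \in [set i | r \in a i])); last by move=> i; rewrite inE.
by rewrite sumr_const loadE.
Qed.

Lemma game_ok (R : realType) n (T : set (rtype R)) l m :
  (0 < n)%N -> S_feasible n T l m -> game_feasible n T l m.
Proof.
move=> n0 Sf Res v typ A a a' v0 Ttyp _ _.
rewrite sum_dev sum_util /welfare.
rewrite -sumrB -big_split /= !mulr_sumr -big_split /=.
apply: ler_sum => r _.
set B := [set i | r \in a i]; set Ap := [set i | r \in a' i].
have lx : load a r = #|B| by rewrite loadE.
have ly : load a' r = (#|Ap :&: B| + #|Ap :\: B|)%N by rewrite loadE cardsID.
have zx : (#|Ap :&: B| <= load a r)%N.
  by rewrite lx; apply: subset_leq_card; apply: subsetIr.
have xw : (load a r + #|Ap :\: B| <= n)%N.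
  have h1 := cardsUI Ap B; have h2 := cardsID B Ap.
  have h3 : (#|Ap :|: B| <= n)%N by rewrite -[X in (_ <= X)%N]card_ord max_card.
  rewrite lx; lia.
have P := ler_wpM2l (v0 r) (@perres _ _ _ _ _ _ _ _ _ n0 Sf (Ttyp r) zx xw).
rewrite ly; move: P.
set z := #|Ap :&: B|; set w := #|Ap :\: B|; set x := load a r.
set f0 := ext n (typ r).2 x; set f1 := ext n (typ r).2 x.+1.
set c0 := ext n (typ r).1 x; set c1 := ext n (typ r).1 (z + w)%N.
move=> P.
have -> : v r * f0 *+ z + v r * f1 *+ w - v r * f0 *+ x + v r * c0
  = v r * ((z%:R - x%:R) * f0 + w%:R * f1 + c0) by ring.
have -> : l * (v r * c1) + m * (v r * c0) = v r * (l * c1 + m * c0) by ring.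
exact: P.
Qed.

Local Open Scope classical_set_scope.

Theorem lemma2 (R : realType) (n : nat) (T : set (rtype R)) :
  (0 < n)%N -> finite_set T -> (GPoA n T <= gamma n T)%E.
Proof.
move=> n0 _.
apply: le_ereal_inf_tmp => _ [p [p1 [p2 Sp]] <-].
apply: ereal_inf_lbound; exists p => //.
by split => //; split => //; apply: game_ok.
Qed.
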